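(* Let $G=(V,E)$ be a graph on $V=\{v_1,\dots,v_N\}$ ($N\ge 3$) with edge weights $w:E\to\mathbb{R}$, and let $\pi^\star=(v_1,\dots,v_N)$ be the ground-truth order, whose ''true edges'' are $(v_k,v_{k+1})$, $1\le k\le N-1$. Assume: (A1) for every internal vertex $v_i$ ($2\le i\le N-1$), its two true incident edges $e_i^-=(v_{i-1},v_i)$ and $e_i^+=(v_i,v_{i+1})$ belong to $E$ and have maximum weight among all edges of $E$ incident to $v_i$; (A2) there exists $\Delta>0$ such that for every internal vertex $v_i$ and every non-true edge $(v_i,u)\in E$, $w(e_i^-)\ge w(v_i,u)+\Delta$ and $w(e_i^+)\ge w(v_i,u)+\Delta$. Let $C=(v_i,v_{i+1},\dots,v_j)$ with $1\le i<j\le N$ be a contiguous substring of $\pi^\star$, and call an edge ''used'' if it is one of $(v_k,v_{k+1})$ with $i\le k<j$ and ''unused'' otherwise. Then: if $i\ge 2$, among the unused edges of $E$ incident to $v_i$ the heaviest is uniquely the true boundary edge $(v_{i-1},v_i)$; and if $j\le N-1$, among the unused edges of $E$ incident to $v_j$ the heaviest is uniquely the true boundary edge $(v_j,v_{j+1})$.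
   Context: A ''contiguous substring'' of $\pi^\star$ is a chain $(v_i,\dots,v_j)$ of consecutive vertices in the true order; its internal edges are the used edges. A non-true edge is any edge of $E$ not of the form $(v_k,v_{k+1})$. *)

(* Defs.v *)
(* Vertices v_1..v_N are encoded as 'I_N (0-based):
   vertex v_{k+1} is the ordinal with value k. *)
From mathcomp Require Import all_boot all_order all_algebra.
Set Implicit Arguments. Unset Strict Implicit. Unset Printing Implicit Defensive.
Import Order.TTheory GRing.Theory Num.Theory.

Definition true_edge (N : nat) (a b : 'I_N) : bool :=
  (a.+1 == b :> nat) || (b.+1 == a :> nat).

Definition used_edge (N : nat) (i j a b : 'I_N) : bool :=
  [exists k : 'I_N, (i <= k < j) &&
     (((a == k :> nat) && (b == k.+1 :> nat)) ||
      ((b == k :> nat) && (a == k.+1 :> nat)))].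

(* Main.v *)
Require Import Defs.
From mathcomp Require Import all_boot all_order all_algebra.
From mathcomp Require Import zify.
Import Order.TTheory GRing.Theory Num.Theory.
Local Open Scope ring_scope.

Theorem mainTheorem2 (R : realFieldType) (N : nat) (E : rel 'I_N)
  (w : 'I_N -> 'I_N -> R)
  (HN : (3 <= N)%N)
  (Esym : symmetric E)
  (wsym : forall x y, w x y = w y x)
  (A1 : forall vm v vp : 'I_N, vm.+1 = v :> nat -> v.+1 = vp :> nat ->
        [/\ E vm v, E v vp &
            forall u : 'I_N, E v u -> w v u <= w vm v /\ w v u <= w v vp])
  (A2 : exists2 Delta : R, 0 < Delta &
        forall vm v vp : 'I_N, vm.+1 = v :> nat -> v.+1 = vp :> nat ->
        forall u : 'I_N, E v u -> ~~ true_edge v u ->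
          w v u + Delta <= w vm v /\ w v u + Delta <= w v vp) :
  forall i j : 'I_N, (i < j)%N ->
    (forall im : 'I_N, im.+1 = i :> nat ->
       E im i /\ ~~ used_edge i j im i /\
       forall u : 'I_N, E i u -> ~~ used_edge i j i u -> u != im ->
         w i u < w im i)
    /\
    (forall jp : 'I_N, j.+1 = jp :> nat ->
       E j jp /\ ~~ used_edge i j j jp /\
       forall u : 'I_N, E j u -> ~~ used_edge i j j u -> u != jp ->
         w j u < w j jp).
Proof.
case: A2 => D D0 A2.
move=> i j lij; split.
- move=> im him.
  have hp : (i.+1 < N)%N by have := ltn_ord j; lia.
  pose vp := Ordinal hp.
  have [E1 E2 _] := A1 im i vp him erefl.
  split => //; split.
    apply/existsP => -[k /andP[/andP[h1 h2] /orP[/andP[/eqP a /eqP b]|/andP[/eqP a /eqP b]]]]; lia.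
  move=> u Eu nu nim.
  have nt : ~~ true_edge i u.
    apply/negP => /orP[/eqP h|/eqP h].
      move/negP: nu; apply; apply/existsP; exists i.
      rewrite leqnn lij /= eqxx /= h eqxx //.
    move/eqP: nim; apply; apply: val_inj => /=; lia.
  have [h _] := A2 im i vp him erefl u Eu nt.
  apply: lt_le_trans h; rewrite ltrDl //.
- move=> jp hjp.
  have hm : (j.-1 < N)%N by have := ltn_ord j; lia.
  pose vm := Ordinal hm.
  have hvm : vm.+1 = j :> nat by rewrite /=; lia.
  have [_ E2 _] := A1 vm j jp hvm hjp.
  split => //; split.
    apply/existsP => -[k /andP[/andP[h1 h2] /orP[/andP[/eqP a /eqP b]|/andP[/eqP a /eqP b]]]]; lia.
  move=> u Eu nu njp.
  have nt : ~~ true_edge j u.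
    apply/negP => /orP[/eqP h|/eqP h].
      move/eqP: njp; apply; apply: val_inj => /=; lia.
    move/negP: nu; apply; apply/existsP; exists u.
    have h1 : (i <= u)%N by lia.
    have h2 : (u < j)%N by lia.
    rewrite h1 h2 /= h eqxx eqxx orbT //.
  have [_ h] := A2 vm j jp hvm hjp u Eu nt.
  apply: lt_le_trans h; rewrite ltrDl //.
Qed.
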